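(* For all integers $n\ge1$, $\Delta_1(n)=0$. For all integers $\ell>1$: $\Delta_\ell(1)<0$ and $\Delta_\ell(2)>0$. Moreover $\Delta_\ell(3)<0$ for $2\le\ell\le 13$ and $\Delta_\ell(3)>0$ for $\ell\ge 14$.
   Context: For integers $n\geq 0$ let $S_n$ be the symmetric group on $n$ elements ($S_0$ trivial). For an integer $\ell\geq 1$ let $C_{\ell,n}=\{(\pi_1,\dots,\pi_\ell)\in S_n^\ell : \pi_j\pi_k=\pi_k\pi_j \text{ for all } 1\le j,k\le \ell\}$ and $N_\ell(n)=|C_{\ell,n}|/|S_n|$ (so $N_\ell(0)=1$). Define $\Delta_\ell(n)=N_\ell(n)^2-N_\ell(n-1)N_\ell(n+1)$ for $n\geq 1$. *)

(* Defs.v *)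
From HB Require Import structures.
From mathcomp Require Import all_boot all_order all_algebra all_fingroup.
Set Implicit Arguments. Unset Strict Implicit. Unset Printing Implicit Defensive.
Import Order.TTheory GRing.Theory Num.Theory.

Definition commuting_tuples (l n : nat) : {set {ffun 'I_l -> 'S_n}} :=
  [set t : {ffun 'I_l -> 'S_n} | [forall j : 'I_l, forall k : 'I_l,
      (t j * t k == t k * t j)%g]].

Definition Ncomm (l n : nat) : rat :=
  (#|commuting_tuples l n|%:R / #|[set: 'S_n]|%:R)%R.

(* Delta_l(n) = N_l(n)^2 - N_l(n-1) N_l(n+1) (used for n >= 1). *)
Definition Delta (l n : nat) : rat :=
  (Ncomm l n ^+ 2 - Ncomm l n.-1 * Ncomm l n.+1)%R.

(* Main.v *)
Require Import Defs.
From mathcomp Require Import all_boot all_order all_algebra all_fingroup.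
From mathcomp Require Import zify ring lra.
Set Implicit Arguments. Unset Strict Implicit. Unset Printing Implicit Defensive.

Section Gen.
Variable gT : finGroupType.
Local Open Scope group_scope.

Definition ctup l (H : {set gT}) : {set {ffun 'I_l -> gT}} :=
  [set t : {ffun 'I_l -> gT} | [forall j, t j \in H] &&
     [forall j : 'I_l, forall k : 'I_l, (t j * t k == t k * t j)]].
Definition CH (H : {set gT}) (x : gT) := [set y in H | x * y == y * x].

Definition consf l (x : gT) (u : {ffun 'I_l -> gT}) : {ffun 'I_l.+1 -> gT} :=
  [ffun i => if unlift ord0 i is Some j then u j else x].
Lemma consf0 l x u : @consf l x u ord0 = x.
Proof. by rewrite ffunE unlift_none. Qed.
Lemma consfS l x u j : @consf l x u (lift ord0 j) = u j.
Proof. by rewrite ffunE liftK. Qed.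
Lemma consf_inj l x : injective (@consf l x).
Proof. by move=> u v E; apply/ffunP => j; rewrite -(consfS x u j) -(consfS x v j) E. Qed.

Lemma ctup_rec l H : #|ctup l.+1 H| = (\sum_(x in H) #|ctup l (CH H x)|)%N.
Proof.
rewrite -sum1_card (partition_big (fun t : {ffun _ -> gT} => t ord0) (fun x => x \in H)) /=; last first.
  by move=> t; rewrite inE => /andP[/forallP A _]; apply: A.
apply: eq_bigr => x Hx.
rewrite -(card_imset _ (@consf_inj l x)) -sum1_card.
apply: eq_bigl => t; apply/idP/idP.
- case/andP=> Ht /eqP t0; rewrite inE in Ht; case/andP: Ht => /forallP A /forallP B.
  apply/imsetP; exists [ffun j => t (lift ord0 j)].
    rewrite inE; apply/andP; split.
      apply/forallP => j; rewrite ffunE inE A /= -t0.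
      by have /forallP := B ord0; move/(_ (lift ord0 j)).
    apply/forallP => j; apply/forallP => k; rewrite !ffunE.
    by have /forallP := B (lift ord0 j); move/(_ (lift ord0 k)).
  apply/ffunP => i; case: (unliftP ord0 i) => [j ->|->]; first by rewrite consfS ffunE.
  by rewrite consf0.
- case/imsetP => u Hu ->; rewrite consf0 eqxx andbT.
  rewrite inE in Hu; case/andP: Hu => /forallP A /forallP B.
  rewrite inE; apply/andP; split.
    apply/forallP => i; case: (unliftP ord0 i) => [j ->|->]; last by rewrite consf0.
    by rewrite consfS; move: (A j); rewrite inE => /andP[].
  apply/forallP => i; apply/forallP => k.
  case: (unliftP ord0 i) => [j ->|->]; case: (unliftP ord0 k) => [j' ->|->];
    rewrite ?consfS ?consf0 //.
  + by have /forallP := B j; move/(_ j').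
  + by move: (A j); rewrite inE => /andP[_ /eqP ->].
  + by move: (A j'); rewrite inE => /andP[_ /eqP ->].
Qed.

Lemma ctup0 H : #|ctup 0 H| = 1%N.
Proof.
have -> : ctup 0 H = setT.
  by apply/setP => t; rewrite !inE; apply/andP; split; apply/forallP; case.
by rewrite cardsT card_ffun card_ord.
Qed.

End Gen.

Definition mulL (s t : seq nat) := [seq nth 0 t (nth 0 s i) | i <- iota 0 (size s)].
Definition commL (s t : seq nat) := mulL s t == mulL t s.
Fixpoint cntL (l : nat) (M : seq (seq nat)) : nat :=
  if l is l'.+1 then \sum_(s <- M) cntL l' (filter (commL s) M) else 1.
Definition Lp n := permutations (iota 0 n).

Section Code.
Variable n : nat.
Local Open Scope group_scope.

Definition code (p : 'S_n) : seq nat := [seq val (p i) | i <- enum 'I_n].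

Lemma size_code p : size (code p) = n.
Proof. by rewrite size_map size_enum_ord. Qed.

Lemma nth_code p (i : 'I_n) : nth 0 (code p) i = val (p i).
Proof.
rewrite (nth_map i); last by rewrite size_enum_ord.
by congr (val (p _)); apply: val_inj; rewrite /= nth_enum_ord.
Qed.

Lemma code_inj : injective code.
Proof. by move=> p q E; apply/permP => i; apply: val_inj; rewrite -!nth_code E. Qed.

Lemma code_mul p q : code (p * q) = mulL (code p) (code q).
Proof.
rewrite /mulL size_code -val_enum_ord -map_comp /code; apply: eq_map => i /=.
by rewrite nth_code (nth_code q (p i)) permM.
Qed.

Lemma code_in p : code p \in Lp n.
Proof.
rewrite mem_permutations.
have U : uniq (code p).
  by rewrite map_inj_uniq ?enum_uniq // => i j /val_inj /perm_inj.
have S1 : {subset code p <= iota 0 n}.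
  by move=> x /mapP[i _ ->]; rewrite mem_iota /= ltn_ord.
have [_ E] := uniq_min_size U S1 (eq_leq (etrans (size_iota 0 n) (esym (size_code p)))).
by apply: uniq_perm; rewrite ?iota_uniq.
Qed.

Lemma code_surj s : s \in Lp n -> exists p, s = code p.
Proof.
move=> Hs.
have U : uniq (map code (enum 'S_n)) by rewrite map_inj_uniq ?enum_uniq //; exact: code_inj.
have S1 : {subset map code (enum 'S_n) <= Lp n}.
  by move=> x /mapP[p _ ->]; exact: code_in.
have S2 : size (Lp n) <= size (map code (enum 'S_n)).
  by rewrite size_map -cardE card_Sn size_permutations ?iota_uniq // size_iota.
have [_ E] := uniq_min_size U S1 S2.
by move: Hs; rewrite -E => /mapP[p _ ->]; exists p.
Qed.

Definition KM (M : seq (seq nat)) := [set x : 'S_n | code x \in M].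

Lemma sum_KM M (F : seq nat -> nat) : uniq M -> {subset M <= Lp n} ->
  (\sum_(x in KM M) F (code x) = \sum_(s <- M) F s)%N.
Proof.
move=> UM SM; rewrite -big_enum -(big_map code xpredT).
apply: perm_big; apply: uniq_perm => //.
  by rewrite map_inj_uniq ?enum_uniq //; exact: code_inj.
move=> s; apply/mapP/idP => [[x]|Hs].
  by rewrite mem_enum inE => H ->.
have [p Ep] := code_surj (SM _ Hs); exists p => //.
by rewrite mem_enum inE -Ep.
Qed.

Lemma CH_KM M x : CH (KM M) x = KM (filter (commL (code x)) M).
Proof.
apply/setP => y; rewrite !inE mem_filter andbC /commL -!code_mul.
by rewrite (inj_eq code_inj).
Qed.

Lemma ctup_KM l M : uniq M -> {subset M <= Lp n} -> #|ctup l (KM M)| = cntL l M.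
Proof.
elim: l M => [|l IH] M UM SM; first exact: ctup0.
rewrite ctup_rec /= -(sum_KM (fun s => cntL l (filter (commL s) M))) //.
apply: eq_bigr => x _; rewrite CH_KM IH ?filter_uniq //.
by move=> s; rewrite mem_filter => /andP[_ /SM].
Qed.

Lemma KM_all : KM (Lp n) = setT.
Proof. by apply/setP => x; rewrite !inE code_in. Qed.

End Code.
Definition abL (M : seq (seq nat)) := all (fun s => all (commL s) M) M.
Definition isDL (M : seq (seq nat)) :=
  [&& size M == 8, count (fun s => filter (commL s) M == M) M == 2 &
   all (fun s => (filter (commL s) M == M) || (abL (filter (commL s) M) && (size (filter (commL s) M) == 4))) M].
Definition classify (M : seq (seq nat)) s :=
  let N := filter (commL s) M in
  if N == M then 0 else if abL N then (size N).+2 else if isDL N then 1 else 100.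

Lemma sum_if_seq (T : eqType) (M : seq T) (P : pred T) a b :
  (\sum_(s <- M) (if P s then a else b) = count P M * a + count (predC P) M * b)%N.
Proof.
elim: M => [|x M IH]; first by rewrite big_nil.
rewrite big_cons IH /=; case: (P x) => /=; lia.
Qed.

Lemma cntL_ab l M : abL M -> cntL l M = size M ^ l.
Proof.
move=> H; elim: l => [|l IH] //=.
rewrite expnS -IH -[X in (X * _)%N]count_predT -sum1_count big_distrl /=.
rewrite !big_seq; apply: eq_bigr => s Hs; rewrite mul1n.
congr cntL; apply/all_filterP; exact: (allP H s Hs).
Qed.

Lemma cntL_D l M : isDL M -> cntL l M + 2 * 2 ^ l = 3 * 4 ^ l.
Proof.
case/and3P => /eqP S8 /eqP C2 /allP A.
elim: l => [|l IH] //=.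
rewrite (@eq_big_seq _ _ _ _ _ _ (fun s => if filter (commL s) M == M then cntL l M else 4 ^ l)).
  rewrite sum_if_seq.
  have E := count_predC (fun s => filter (commL s) M == M) M.
  rewrite C2 S8 in E.
  have -> : count (predC (fun s => filter (commL s) M == M)) M = 6 by lia.
  rewrite C2 !expnS; lia.
move=> s Hs; case: ifP => [/eqP -> //|F].
move: (A s Hs); rewrite F /= => /andP[ab /eqP s4].
by rewrite cntL_ab // s4.
Qed.

Definition Gval M l k :=
  match k with 0 => cntL l M | 1 => 3 * 4 ^ l - 2 * 2 ^ l | k'.+2 => k' ^ l end.

Lemma cntL_codes M l codes : all (fun s => classify M s != 100) M ->
  map (classify M) M = codes -> cntL l.+1 M = \sum_(k <- codes) Gval M l k.
Proof.
move=> /allP A <-; rewrite big_map /= big_seq [RHS]big_seq.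
apply: eq_bigr => s Hs; move: (A s Hs); rewrite /classify.
case: ifP => [/eqP -> //|_]; case: ifP => [ab _|_]; first by rewrite /= cntL_ab.
case: ifP => // D _ /=; have := cntL_D l D; lia.
Qed.



Lemma cnt_small n l : n <= 2 -> cntL l (Lp n) = (n`!) ^ l.
Proof.
case: n => [|[|[|n]]] // _.
- rewrite cntL_ab; last by vm_compute. by [].
- rewrite cntL_ab; last by vm_compute. by [].
- rewrite cntL_ab; last by vm_compute. by [].
Qed.

Lemma cnt3 l : cntL l (Lp 3) + 3 = 3 * 2 ^ l + 3 ^ l.
Proof.
have H : forall M, all (fun s => classify M s != 100) M ->
  map (classify M) M = [:: 4; 0; 5; 4; 5; 4] -> cntL l M + 3 = 3 * 2 ^ l + 3 ^ l.
  move=> M A C; elim: l => [//|l IH].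
  rewrite (cntL_codes l A C) !big_cons big_nil /= !expnS; lia.
by apply: H; vm_compute.
Qed.

Lemma cnt4 l : cntL l (Lp 4) + 6 * 2 ^ l + 4 = 7 * 4 ^ l + 4 * 3 ^ l.
Proof.
have H : forall M, all (fun s => classify M s != 100) M ->
  map (classify M) M = [:: 5; 6; 6; 5; 6; 0; 6; 5; 5; 6; 1; 6; 6; 1; 5; 6; 5; 6; 5; 6; 6; 5; 6; 1] ->
  cntL l M + 6 * 2 ^ l + 4 = 7 * 4 ^ l + 4 * 3 ^ l.
  move=> M A C; elim: l => [//|l IH].
  have h : 2 ^ l <= 4 ^ l by rewrite (_ : 4 = 2 * 2) // expnMn leq_pmulr // expn_gt0.
  rewrite (cntL_codes l A C) !big_cons big_nil /= !expnS; lia.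
by apply: H; vm_compute.
Qed.

Lemma ineq2 l : 2 <= l -> 6 * 2 ^ l + 2 * 3 ^ l < 3 * 4 ^ l + 6.
Proof.
elim: l => [//|l IH] h.
case: (ltnP 2 l.+1) => h'.
  have := IH h'; rewrite !expnS.
  have : 2 ^ 2 <= 2 ^ l by rewrite leq_exp2l.
  have : 1 <= 3 ^ l by rewrite expn_gt0.
  lia.
by have -> : l = 1 by lia.
Qed.

Lemma ineq86 l : 2 <= l -> 36 * 6 ^ l <= 21 * 8 ^ l.
Proof.
elim: l => [//|l IH] h.
case: (ltnP 2 l.+1) => h'.
  have := IH h'; rewrite !expnS; lia.
by have -> : l = 1 by lia.
Qed.

Lemma ineq3big l : 14 <= l -> 21 * 8 ^ l + 60 * 2 ^ l + 24 * 3 ^ l < 4 * 9 ^ l + 12 * 6 ^ l + 54 * 4 ^ l + 36.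
Proof.
move=> h.
suff : 21 * 8 ^ l + 60 * 2 ^ l + 24 * 3 ^ l + 1 <= 4 * 9 ^ l + 12 * 6 ^ l by lia.
elim: l h => [//|l IH] h.
case: (ltnP 14 l.+1) => h'.
  have := IH h'; have := ineq86 (l := l); rewrite !expnS; lia.
have -> : l = 13 by lia.
lia.
Qed.

Lemma ineq3small l : 2 <= l <= 13 -> 4 * 9 ^ l + 12 * 6 ^ l + 54 * 4 ^ l + 36 < 21 * 8 ^ l + 60 * 2 ^ l + 24 * 3 ^ l.
Proof.
move=> /andP[h1 h2].
do 14 (case: l h1 h2 => [|l] h1 h2; [lia|]).
lia.
Qed.

Lemma e4 l : (4 ^ l = 2 ^ l * 2 ^ l)%N.
Proof. by rewrite -expnMn. Qed.
Lemma e8 l : (8 ^ l = 2 ^ l * 2 ^ l * 2 ^ l)%N.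
Proof. by rewrite -!expnMn. Qed.
Lemma e9 l : (9 ^ l = 3 ^ l * 3 ^ l)%N.
Proof. by rewrite -!expnMn. Qed.
Lemma e6 l : (6 ^ l = 2 ^ l * 3 ^ l)%N.
Proof. by rewrite -!expnMn. Qed.

Import Order.TTheory GRing.Theory Num.Theory.

Lemma ct_eq l n : commuting_tuples l n = ctup l [set: 'S_n].
Proof.
apply/setP => t; rewrite !inE.
have -> : [forall j, t j \in [set: 'S_n]] by apply/forallP => j; rewrite inE.
by [].
Qed.

Lemma NcommE l n : Ncomm l n = ((cntL l (Lp n))%:R / (n`!)%:R)%R.
Proof.
rewrite /Ncomm cardsT card_Sn ct_eq -(KM_all n) ctup_KM //.
exact: permutations_uniq.
Qed.

Lemma Ncomm1 n : Ncomm 1 n = 1%R.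
Proof.
rewrite NcommE /= sum1_size size_permutations ?iota_uniq // size_iota.
by rewrite divff // pnatr_eq0 -lt0n fact_gt0.
Qed.

Local Open Scope ring_scope.

Lemma N0 l : Ncomm l 0 = 1.
Proof. by rewrite NcommE cnt_small // /= exp1n divr1. Qed.
Lemma N1 l : Ncomm l 1 = 1.
Proof. by rewrite NcommE cnt_small // /= exp1n divr1. Qed.
Lemma N2 l : Ncomm l 2 = (2 ^ l)%:R / 2.
Proof. by rewrite NcommE cnt_small. Qed.
Lemma N3 l : Ncomm l 3 = (3 * (2 ^ l)%:R + (3 ^ l)%:R - 3) / 6.
Proof.
rewrite NcommE.
have E : ((cntL l (Lp 3) + 3)%N%:R : rat) = (3 * 2 ^ l + 3 ^ l)%N%:R by rewrite cnt3.
rewrite (_ : (3`!)%:R = 6) //; congr (_ / _).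
lra.
Qed.
Lemma N4 l : Ncomm l 4 = (7 * ((2 ^ l)%:R * (2 ^ l)%:R) + 4 * (3 ^ l)%:R - 6 * (2 ^ l)%:R - 4) / 24.
Proof.
rewrite NcommE.
have E : ((cntL l (Lp 4) + 6 * 2 ^ l + 4)%N%:R : rat) = (7 * (2 ^ l * 2 ^ l) + 4 * 3 ^ l)%N%:R.
  by rewrite cnt4 -expnMn.
rewrite (_ : (4`!)%:R = 24) //; congr (_ / _).
lra.
Qed.

Lemma DeltaE l n : Delta l n.+1 = Ncomm l n.+1 ^+ 2 - Ncomm l n * Ncomm l n.+2.
Proof. by []. Qed.

Theorem lemma2p1 :
  (forall n : nat, (1 <= n)%N -> Delta 1 n = 0%R) /\
  (forall l : nat, (1 < l)%N -> (Delta l 1 < 0)%R /\ (0 < Delta l 2)%R) /\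
  (forall l : nat, (2 <= l <= 13)%N -> (Delta l 3 < 0)%R) /\
  (forall l : nat, (14 <= l)%N -> (0 < Delta l 3)%R).
Proof.
split.
  case=> [//|n] _; rewrite DeltaE !Ncomm1; ring.
split.
  move=> l hl; rewrite DeltaE N0 N1 DeltaE N1 N2 N3.
  have h1 : (2 ^ 2 <= 2 ^ l)%N by rewrite leq_exp2l.
  have h2 := ineq2 hl.
  rewrite e4 in h2.
  move: h1 h2; rewrite -(ler_nat rat) -(ltr_nat rat) => h1 h2.
  split; lra.
split.
  move=> l hl; rewrite DeltaE N2 N3 N4.
  have h2 := ineq3small hl.
  rewrite e4 e6 e8 e9 in h2.
  move: h2; rewrite -(ltr_nat rat) => h2.
  lra.
move=> l hl; rewrite DeltaE N2 N3 N4.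
have h2 := ineq3big hl.
rewrite e4 e6 e8 e9 in h2.
move: h2; rewrite -(ltr_nat rat) => h2.
lra.
Qed.
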